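(* Let $(l,k,b)$ be a suspension triplet for $(X_A,\sigma_A)$. Then the one-sided suspension space $S^{l,k}_{A,b}$ is a compact Hausdorff space.
   Context: Let $N>1$ and $A$ an irreducible $N\times N$ $\{0,1\}$-matrix which is not a permutation matrix. $X_A$ is the compact space of sequences $(x_n)_{n\in\mathbb N}$, $x_n\in\{1,\dots,N\}$, $A(x_n,x_{n+1})=1$ (product topology), with $\sigma_A((x_n)_n)=(x_{n+1})_n$. $\mathbb Z_+$, $\mathbb R_+$ are nonnegative integers/reals. $H^A$ is the quotient of $C(X_A,\mathbb Z)$ by $\{u-u\circ\sigma_A\}$, $H^A_+$ the classes of $\mathbb Z_+$-valued continuous functions; $[f]\in H^A_+$ is an order unit if for every $[u]\in H^A$ some $n\in\mathbb N$ has $n[f]-[u]\in H^A_+$. A suspension triplet is $(l,k,b)$ with $l,k\in C(X_A,\mathbb R_+)$, $b\in C(X_A,\mathbb R)$ such that $c=l-k$ is integer-valued with $[c]$ an order unit, and $l-b$, $k-b\circ\sigma_A$ take values in $\mathbb Z_+$. $X^{\mathbb R}_{A,b}=\{(x,r)\in X_A\times\mathbb R: r\ge b(x)\}$ (subspace topology of $X_A\times\mathbb R$), $\sim_{l,k}$ is the equivalence relation generated by $(x,r)\sim_{l,k}(\sigma_A(x),r-c(x))$ whenever $r\ge l(x)$, and $S^{l,k}_{A,b}=X^{\mathbb R}_{A,b}/\!\sim_{l,k}$ with the quotient topology. *)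

(* Defs.v *)
From HB Require Import structures.
From Stdlib Require Import Relations.
From mathcomp Require Import all_boot all_order all_algebra perm generic_quotient.
From mathcomp Require Import all_classical all_reals all_analysis.
Import Order.TTheory GRing.Theory Num.Theory.
Import numFieldTopology.Exports numFieldNormedType.Exports.

Set Implicit Arguments.
Unset Strict Implicit.
Unset Printing Implicit Defensive.

Local Open Scope classical_set_scope.
Local Open Scope ring_scope.
Local Open Scope quotient_scope.

Definition zero_one_mx (N : nat) (A : 'M[nat]_N) : Prop :=
  forall i j, A i j = 0%N \/ A i j = 1%N.

Definition irreducible_mx (N : nat) (A : 'M[nat]_N) : Prop :=
  forall i j, exists n : nat, (0 < (A ^+ n) i j)%N.

Definition is_permutation_mx (N : nat) (A : 'M[nat]_N) : Prop :=
  exists s : {perm 'I_N}, A = perm_mx s.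

(** Alphabet {1,..,N} (here 'I_N) with the discrete topology, and the
    space of all one-sided sequences with the product topology. *)
Notation alphabet N := (discrete_topology 'I_N).
Notation seq_space N := {ptws nat -> alphabet N}.

Definition XA_set (N : nat) (A : 'M[nat]_N) : set (seq_space N) :=
  [set x | forall n : nat, A (x n) (x n.+1) = 1%N].

Notation XA A := (set_type (XA_set A)).

Lemma shift_in_XA (N : nat) (A : 'M[nat]_N) (x : XA A) :
  XA_set A (fun n => (\val x : seq_space N) n.+1).
Proof.
case: x => x /= /set_mem Hx n; exact: Hx.
Qed.

Definition sigmaA (N : nat) (A : 'M[nat]_N) (x : XA A) : XA A :=
  SigSub (mem_set (shift_in_XA x)).

Definition contZ (N : nat) (A : 'M[nat]_N) (f : XA A -> int) : Prop :=
  continuous (f : XA A -> discrete_topology int).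

(** [f] = [g] in H^A = C(X_A,Z) / {u - u o sigma_A | u in C(X_A,Z)}. *)
Definition cohomologous (N : nat) (A : 'M[nat]_N) (f g : XA A -> int) : Prop :=
  exists u : XA A -> int, contZ u /\ forall x, f x - g x = u x - u (sigmaA x).

(** [f] belongs to H^A_+ : it is the class of a Z_+-valued continuous function. *)
Definition in_HA_pos (N : nat) (A : 'M[nat]_N) (f : XA A -> int) : Prop :=
  exists g : XA A -> int, contZ g /\ (forall x, 0 <= g x) /\ cohomologous f g.

Definition order_unit (N : nat) (A : 'M[nat]_N) (f : XA A -> int) : Prop :=
  contZ f /\ in_HA_pos f /\
  forall u : XA A -> int, contZ u ->
    exists n : nat, in_HA_pos (fun x => (f x *+ n) - u x).

Section Suspension.
Variable R : realType.

Definition suspension_triplet (N : nat) (A : 'M[nat]_N)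
    (l k b : XA A -> R) : Prop :=
  [/\ continuous l /\ continuous k /\ continuous b,
      (forall x, 0 <= l x) /\ (forall x, 0 <= k x),
      (forall x, l x - k x \is a Num.int)
        /\ order_unit (fun x => Num.floor (l x - k x)),
      (forall x, l x - b x \is a Num.nat)
    & (forall x, k x - b (sigmaA x) \is a Num.nat)].

Definition XR_set (N : nat) (A : 'M[nat]_N) (b : XA A -> R) : set (XA A * R) :=
  [set p | b p.1 <= p.2].

Notation XR b := (set_type (XR_set b)).

Definition susp_step (N : nat) (A : 'M[nat]_N) (l k b : XA A -> R)
    (p q : XR b) : Prop :=
  let: (x, r) := (\val p : XA A * R) in
  l x <= r /\ (\val q : XA A * R) = (sigmaA x, r - (l x - k x)).

End Suspension.

Section EquivClosure.
Variables (T : choiceType) (rel0 : T -> T -> Prop).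

Definition gen_equiv : rel T := fun x y => `[< clos_refl_sym_trans T rel0 x y >].

Lemma gen_equiv_refl : reflexive gen_equiv.
Proof. by move=> x; apply/asboolP; apply: rst_refl. Qed.

Lemma gen_equiv_sym : symmetric gen_equiv.
Proof.
move=> x y; apply/asboolP/asboolP => H; exact: rst_sym.
Qed.

Lemma gen_equiv_trans : transitive gen_equiv.
Proof.
move=> y x z /asboolP Hxy /asboolP Hyz; apply/asboolP; exact: rst_trans Hyz.
Qed.

Definition gen_equiv_rel : equiv_rel T :=
  EquivRel gen_equiv gen_equiv_refl gen_equiv_sym gen_equiv_trans.
End EquivClosure.

Definition suspension_space (R : realType) (N : nat) (A : 'M[nat]_N)
    (l k b : XA A -> R) : Type :=
  quotient_topology {eq_quot gen_equiv_rel (@susp_step R N A l k b)}.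

(* Main.v *)
Require Import Defs.
From HB Require Import structures.
From Stdlib Require Import Relations.
From mathcomp Require Import all_boot all_order all_algebra perm generic_quotient.
From mathcomp Require Import all_classical all_reals all_analysis.
Import Order.TTheory GRing.Theory Num.Theory.
Import numFieldTopology.Exports numFieldNormedType.Exports.
Set Implicit Arguments.
Unset Strict Implicit.
Unset Printing Implicit Defensive.
From mathcomp Require Import lra zify.
Local Open Scope classical_set_scope.
Local Open Scope ring_scope.
Local Open Scope quotient_scope.
Lemma pair_continuous {T X Y : topologicalType} (f : T -> X) (g : T -> Y) :
  continuous f -> continuous g -> continuous (fun t => (f t, g t)).
Proof. move=> cf cg t; apply: cvg_pair; [exact: cf|exact: cg]. Qed.
Lemma fst_cont {X Y : topologicalType} : continuous (@fst X Y).
Proof. move=> [x y]; exact: cvg_fst. Qed.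
Lemma snd_cont {X Y : topologicalType} : continuous (@snd X Y).
Proof. move=> [x y]; exact: cvg_snd. Qed.

Lemma prod_cont_coord {I : choiceType} {X : topologicalType} {K : I -> topologicalType}
  (f : X -> prod_topology K) : (forall i, continuous (fun x => f x i)) -> continuous f.
Proof.
move=> cf x; apply/cvg_sup.
move=> i; move: x; apply/(@continuousP _ (initial_topology (@^~ i))) => U [V oV <-].
exact: open_comp (fun y _ => cf i y) oV.
Qed.

Lemma compact_set_type {X : topologicalType} (E : set X) :
  compact E -> compact [set: set_type E].
Proof.
move=> cE.
have [[e0 _]|none] := pselect (exists e : set_type E, True); last first.
  suff -> : [set: set_type E] = set0 by exact: compact0.
  by rewrite eqEsubset; split => // e _; apply: none; exists e.
pose h := fun z : X => match pselect (E z) with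
  | left Ez => exist _ z (mem_set Ez) | right _ => e0 end.
suff -> : [set: set_type E] = h @` E.
  apply: continuous_compact => //.
  apply/subspace_sigL_continuousP.
  have -> : sigL E h = id.
    apply/funext => e /=; rewrite /h /=; case: pselect => [Ez|nEz].
      by apply: val_inj.
    by exfalso; apply: nEz; exact: (set_mem (valP e)).
  by move=> x; exact: cvg_id.
rewrite eqEsubset; split => // e _; exists (val e); first exact: (set_mem (valP e)).
rewrite /h; case: pselect => [Ez|nEz]; first by apply: val_inj.
by exfalso; apply: nEz; exact: (set_mem (valP e)).
Qed.

Section XAtop.
Variables (N : nat) (A : 'M[nat]_N).

Lemma XA_closed : closed (XA_set A).
Proof.
move=> z zcl n.
have nb : nbhs z [set y : seq_space N | y n = z n /\ y n.+1 = z n.+1].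
  apply: filterI.
  - exact: (@proj_continuous nat (fun _ => alphabet N) n z [set z n] (discrete_set1 _)).
  - exact: (@proj_continuous nat (fun _ => alphabet N) n.+1 z [set z n.+1] (discrete_set1 _)).
have [y [Ay [yn yn1]]] := zcl _ nb.
by rewrite -yn -yn1; exact: Ay.
Qed.

Lemma seq_space_compact : compact [set: seq_space N].
Proof.
have := @tychonoff nat (fun _ => alphabet N) (fun _ => setT)
  (fun _ => @finite_compact (alphabet N) setT (@finite_finset ('I_N : finType) setT)).
set S := (X in compact X -> _).
have -> : S = setT by rewrite /S; apply/funext => f; apply/propext; split.
by [].
Qed.

Lemma XA_compact : compact [set: XA A].
Proof.
apply: compact_set_type.
apply: (@subclosed_compact _ _ setT XA_closed) => //.
exact: seq_space_compact.
Qed.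

Lemma shift_continuous : continuous (fun z : seq_space N => (fun n => z n.+1) : seq_space N).
Proof.
apply: prod_cont_coord => i.
exact: (@proj_continuous nat (fun _ => alphabet N) i.+1).
Qed.

Lemma sigmaA_continuous : continuous (@sigmaA N A).
Proof.
apply: (@continuous_comp_initial _ _ _ (@set_val _ (XA_set A))).
have -> : (set_val \o @sigmaA N A) = (fun z : seq_space N => (fun n => z n.+1) : seq_space N) \o set_val by [].
move=> x; apply: continuous_comp; first exact: initial_continuous.
exact: shift_continuous.
Qed.

End XAtop.
Lemma cont_from_discrete (T : choiceType) (Y : topologicalType)
  (f : discrete_topology T -> Y) : continuous f.
Proof.
move=> x U /nbhs_singleton Ux; apply: open_nbhs_nbhs; split => //.
exact: discrete_open.
Qed.

Section Main.
Variables (R : realType) (N : nat) (A : 'M[nat]_N) (l k b : XA A -> R).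
Hypothesis Htrip : suspension_triplet l k b.

Let sig := @sigmaA N A.
Definition cc (x : XA A) : R := l x - k x.
Definition Sc (j : nat) (x : XA A) : R := \sum_(i < j) cc (iter i sig x).

Lemma ScS j x : Sc j.+1 x = Sc j x + cc (iter j sig x).
Proof. by rewrite /Sc big_ord_recr. Qed.

Lemma ScSr j x : Sc j.+1 x = cc x + Sc j (sig x).
Proof.
rewrite /Sc big_ord_recl /=; congr (_ + _); apply: eq_bigr => i _.
by rewrite add0n -iterS iterSr.
Qed.

Lemma l_cont : continuous l. Proof. by case: Htrip => -[]. Qed.
Lemma k_cont : continuous k. Proof. by case: Htrip => -[? []]. Qed.
Lemma b_cont : continuous b. Proof. by case: Htrip => -[? []]. Qed.
Lemma l_ge0 x : 0 <= l x. Proof. by case: Htrip => _ []. Qed.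
Lemma k_ge0 x : 0 <= k x. Proof. by case: Htrip => _ []. Qed.
Lemma lb_ge0 x : b x <= l x.
Proof. by case: Htrip => _ _ _ /(_ x) /natr_ge0; rewrite subr_ge0. Qed.
Lemma kb_ge0 x : b (sig x) <= k x.
Proof. by case: Htrip => _ _ _ _ /(_ x) /natr_ge0; rewrite subr_ge0. Qed.

Lemma key_bound : exists (n : nat) (B : R), forall x j,
  j%:R - B <= n%:R * Sc j x.
Proof.
case: Htrip => _ _ [cint [_ [_ ou]]] _ _.
have [|n [g [_ [g0 [v [cv hv]]]]]] := ou (fun _ => 1).
  exact: cst_continuous.
pose vR := fun x => ((v x)%:~R : R).
have cvR : continuous vR.
  move=> x; apply: (@continuous_comp _ (discrete_topology int) _ v (fun z : discrete_topology int => (z%:~R : R))).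
    exact: cv.
  exact: cont_from_discrete.
have cpt := continuous_compact (continuous_subspaceT cvR) (@XA_compact N A).
have [M [_ HM]] := compact_bounded cpt.
have vb : forall x, `|vR x| <= M + 1.
  by move=> x; apply: (HM (M + 1)); [lra | exists x].
have step : forall x, 1 + vR x - vR (sig x) <= n%:R * cc x.
  move=> x; rewrite /cc -(floorK (cint x)) /vR.
  have h := hv x.
  have e : (1 + v x - v (sig x)) <= (Num.floor (l x - k x)) *+ n.
    have := g0 x; move: h; set a := Num.floor _; move: a => a; lra.
  rewrite -(ler_int R) in e.
  move: e; rewrite !rmorphD /= rmorphN /= rmorphMn /= -mulr_natl.
  by [].
exists n, (2 * (M + 1)) => x j.
suff : j%:R + vR x - vR (iter j sig x) <= n%:R * Sc j x.
  have := vb x; have := vb (iter j sig x).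
  move=> h1 h2; rewrite !ler_norml in h1 h2.
  case/andP: h1 => h1 h1'; case/andP: h2 => h2 h2'; lra.
elim: j => [|j IH]; first by rewrite /Sc big_ord0 mulr0 /=; lra.
rewrite ScS mulrDr iterS; have := step (iter j sig x).
rewrite -[j.+1]addn1 natrD; lra.
Qed.

Local Notation XR := (set_type (XR_set b)).
Local Notation step := (@susp_step R N A l k b).
Local Notation crst := (clos_refl_sym_trans XR step).

Definition mkXR (x : XA A) (r : R) (h : b x <= r) : XR :=
  exist _ (x, r) (mem_set (h : XR_set b (x, r))).

Lemma XR_ge (p : XR) : b (val p).1 <= (val p).2.
Proof. exact: (set_mem (valP p)). Qed.

Lemma chain (p : XR) j :
  (forall i, (i < j)%N -> l (iter i sig (val p).1) <= (val p).2 - Sc i (val p).1) ->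
  exists q : XR, val q = (iter j sig (val p).1, (val p).2 - Sc j (val p).1)
    /\ crst p q.
Proof.
elim: j => [|j IH] H.
  exists p; split; last exact: rst_refl.
  by rewrite /Sc big_ord0 subr0 /=; case: (val p).
have [q [vq pq]] := IH (fun i hi => H i (ltnW hi)).
have Hj := H j (ltnSn j).
set X := iter j sig (val p).1 in vq Hj.
set r := (val p).2 - Sc j (val p).1 in vq Hj.
have hb : b (sig X) <= r - cc X.
  by have := kb_ge0 X; rewrite /cc; lra.
exists (mkXR hb); split.
  by rewrite /= ScS /r /X /cc; congr pair; lra.
apply: rst_trans pq _; apply: rst_step.
rewrite /susp_step vq; split => //.
Qed.

Lemma normal_form (p : XR) :
  exists q : XR, crst p q /\ (val q).2 < l (val q).1.
Proof.
have [n [B HB]] := key_bound.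
set x := (val p).1; set r := (val p).2.
pose P j := (r - Sc j x < l (iter j sig x)).
have exP : exists j, P j.
  exists (Num.truncn (n%:R * r + B)).+1; rewrite /P.
  set j := (Num.truncn _).+1.
  have hj := truncnS_gt (n%:R * r + B); rewrite -/j in hj.
  have := HB x j; have := l_ge0 (iter j sig x).
  move=> l0 hb; case: (leP (Sc j x) r) => [hle|hlt]; last by lra.
  have : n%:R * Sc j x <= n%:R * r.
    by apply: ler_wpM2l; [exact: ler0n | exact: hle].
  lra.
case: (ex_minnP exP) => j0 Pj0 minj0.
have [|q [vq pq]] := @chain p j0.
  move=> i hi; rewrite leNgt; apply/negP => Pi.
  by have := minj0 i Pi; rewrite leqNgt hi.
by exists q; split => //; rewrite vq.
Qed.

Section Gfun.
Variables (n : nat) (B : R).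
Hypothesis HB : forall x j, j%:R - B <= n%:R * Sc j x.
Variables (d : R) (phi : XA A -> R).
Hypothesis d0 : 0 < d.
Hypothesis phic : continuous phi.

Definition psi j (p : XA A * R) : XA A * R := (iter j sig p.1, p.2 - Sc j p.1).
Definition ww (p : XA A * R) : R :=
  Num.min 1 (Num.max 0 ((p.2 - l p.1) / d + 1)).
Definition gg (p : XA A * R) : R := phi p.1 * (l p.1 - p.2) * (1 - ww p).
Definition WW j p := \prod_(i < j) ww (psi i p).
Definition term j p := WW j p * gg (psi j p).
Definition TT M p := \sum_(j < M) term j p.
Definition M0 (r : R) : nat := (Num.truncn (n%:R * (r + d) + B)).+2.
Definition GG p := TT (M0 p.2) p.

Lemma ww1 p : l p.1 <= p.2 -> ww p = 1.
Proof.
move=> h; rewrite /ww; have : 1 <= (p.2 - l p.1) / d + 1.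
  by rewrite lerDr divr_ge0 // ?subr_ge0 // ltW.
move=> h1; rewrite (@max_r _ _ 0) ?(le_trans _ h1) //.
by rewrite min_l.
Qed.

Lemma ww0 p : p.2 <= l p.1 - d -> ww p = 0.
Proof.
move=> h; rewrite /ww; have : (p.2 - l p.1) / d + 1 <= 0.
  rewrite -(lerD2r (-1)) addrK add0r ler_pdivrMr // mulN1r; lra.
by move=> h1; rewrite max_l // min_r.
Qed.

Lemma gg0 p : l p.1 <= p.2 -> gg p = 0.
Proof. by move=> h; rewrite /gg ww1 // subrr mulr0. Qed.

Lemma psi0 p : psi 0 p = p.
Proof. by rewrite /psi /Sc big_ord0 subr0; case: p. Qed.

Lemma psiS j x r : psi j.+1 (x, r) = psi j (sig x, r - cc x).
Proof. by rewrite /psi /= -iterS iterSr ScSr opprD addrA. Qed.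

Lemma vanish x r : ww (psi (Num.truncn (n%:R * (r + d) + B)).+1 (x, r)) = 0.
Proof.
set i0 := (Num.truncn _).+1.
apply: ww0; rewrite /psi /=.
have hj := truncnS_gt (n%:R * (r + d) + B); rewrite -/i0 in hj.
have := HB x i0; have := l_ge0 (iter i0 sig x).
move=> l0 hb; case: (ltP (Sc i0 x) (r + d)) => [hlt|hle]; last by lra.
have : n%:R * Sc i0 x <= n%:R * (r + d).
  by apply: ler_wpM2l; [exact: ler0n | exact: ltW].
lra.
Qed.

Lemma term0 j x r : (M0 r <= j)%N -> term j (x, r) = 0.
Proof.
move=> hj; rewrite /term /WW.
suff -> : \prod_(i < j) ww (psi i (x, r)) = 0 by rewrite mul0r.
apply/eqP/prodf_eq0.
have hi : ((Num.truncn (n%:R * (r + d) + B)).+1 < j)%N by exact: hj.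
by exists (Ordinal hi) => //; rewrite /= vanish.
Qed.

Lemma TT_stable M x r : (M0 r <= M)%N -> TT M (x, r) = GG (x, r).
Proof.
rewrite /GG /=; elim: M => [|M IH]; first by rewrite /M0.
rewrite leq_eqVlt => /orP [/eqP <- //|hM].
by rewrite /TT big_ord_recr /= -/(TT M (x, r)) IH // term0 // addr0.
Qed.

Lemma GG_inv x r : l x <= r -> GG (x, r) = GG (sig x, r - cc x).
Proof.
move=> hl.
set M := maxn (M0 r) (M0 (r - cc x)).
rewrite -(@TT_stable M.+1 x r); last by rewrite leqW // leq_maxl.
rewrite -(@TT_stable M (sig x) (r - cc x)); last by rewrite leq_maxr.
rewrite /TT big_ord_recl /term /WW big_ord0 mul1r psi0 gg0 // add0r.
apply: eq_bigr => j _; rewrite big_ord_recl /= psi0 ww1 // mul1r psiS.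
by congr (_ * _); apply: eq_bigr => i _; rewrite psiS.
Qed.

End Gfun.

Lemma iter_cont j : continuous (iter j sig).
Proof.
elim: j => [|j IH] x /=; first exact: cvg_id.
apply: (@continuous_comp _ _ _ (iter j sig) sig); first exact: IH.
exact: sigmaA_continuous.
Qed.

Lemma cc_cont : continuous cc.
Proof. by move=> x; apply: continuousB; [exact: l_cont | exact: k_cont]. Qed.

Lemma Sc_cont j : continuous (Sc j).
Proof.
elim: j => [|j IH].
  have -> : Sc 0 = fun _ => 0 by apply/funext => x; rewrite /Sc big_ord0.
  exact: cst_continuous.
have -> : Sc j.+1 = Sc j + (cc \o iter j sig) by apply/funext => x; rewrite ScS.
move=> x; apply: continuousD; first exact: IH.
apply: continuous_comp; [exact: iter_cont | exact: cc_cont].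
Qed.

Section Gcont.
Variables (n : nat) (B : R).
Variables (d : R) (phi : XA A -> R).
Hypothesis phic : continuous phi.

Lemma psi_cont j : continuous (psi j).
Proof.
apply: pair_continuous.
  by move=> p; apply: continuous_comp; [exact: fst_cont | exact: iter_cont].
move=> p; apply: continuousB; first exact: snd_cont.
by apply: continuous_comp; [exact: fst_cont | exact: Sc_cont].
Qed.

Lemma ww_cont : continuous (ww d).
Proof.
have -> : ww d = (fun=> 1) \min ((fun=> 0) \max (fun p : XA A * R => (p.2 - l p.1) / d + 1)).
  by apply/funext => p.
apply: min_fun_continuous; first exact: cst_continuous.
apply: max_fun_continuous; first exact: cst_continuous.
move=> p; apply: (@continuousD _ _ _ (fun p : XA A * R => (p.2 - l p.1) / d) (fun=> 1)); last exact: cst_continuous.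
apply: (@continuousM _ _ (fun p : XA A * R => (p.2 - l p.1)) (fun=> d^-1)); last exact: cst_continuous.
apply: (@continuousB _ _ _ snd (l \o fst)); first exact: snd_cont.
by apply: continuous_comp; [exact: fst_cont | exact: l_cont].
Qed.

Lemma gg_cont : continuous (gg d phi).
Proof.
move=> p; apply: (@continuousM _ _ (fun p : XA A * R => phi p.1 * (l p.1 - p.2)) ((fun=> 1) - ww d)); last first.
  by apply: (@continuousB R R^o _ (fun=> (1:R)) (ww d)); [exact: cst_continuous | exact: ww_cont].
apply: (@continuousM _ _ (phi \o fst) (fun p : XA A * R => (l p.1 - p.2))).
  by apply: continuous_comp; [exact: fst_cont | exact: phic].
apply: (@continuousB _ _ _ (l \o fst) snd); last exact: snd_cont.
by apply: continuous_comp; [exact: fst_cont | exact: l_cont].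
Qed.

Lemma WW_cont j : continuous (WW d j).
Proof.
elim: j => [|j IH].
  have -> : WW d 0 = fun _ => 1 by apply/funext => p; rewrite /WW big_ord0.
  exact: cst_continuous.
have -> : WW d j.+1 = WW d j \* (ww d \o psi j).
  by apply/funext => p; rewrite /WW big_ord_recr.
move=> p; apply: continuousM; first exact: IH.
by apply: continuous_comp; [exact: psi_cont | exact: ww_cont].
Qed.

Lemma TT_cont M : continuous (TT d phi M).
Proof.
elim: M => [|M IH].
  have -> : TT d phi 0 = fun _ => 0 by apply/funext => p; rewrite /TT big_ord0.
  exact: cst_continuous.
have -> : TT d phi M.+1 = TT d phi M + term d phi M.
  by apply/funext => p; rewrite /TT big_ord_recr.
move=> p; apply: continuousD; first exact: IH.
apply: continuousM; first exact: WW_cont.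
by apply: continuous_comp; [exact: psi_cont | exact: gg_cont].
Qed.

End Gcont.

Lemma M0_mono n B d r r' : r <= r' -> (M0 n B d r <= M0 n B d r')%N.
Proof.
move=> h; rewrite /M0 ltnS ltnS; apply: le_truncn; rewrite lerD2r.
by apply: ler_wpM2l; [exact: ler0n | rewrite lerD2r].
Qed.

Lemma GG_cont n B d phi
  (HB : forall x j, j%:R - B <= n%:R * Sc j x) (d0 : 0 < d) (phic : continuous phi) :
  continuous (GG n B d phi).
Proof.
move=> [x0 r0].
set M := M0 n B d (r0 + 1).
have nb : \forall p \near (x0, r0), TT d phi M p = GG n B d phi p.
  have : \forall p \near (x0, r0), p.2 < r0 + 1.
    have h1 : \forall r \near r0, r < r0 + 1 by apply: lt_nbhsl; lra.
    exact: (@snd_cont (XA A) R (x0, r0) _ h1).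
  apply: filterS => -[x r] /= hr.
  apply: (TT_stable HB phi d0 x); apply: M0_mono; exact: ltW.
apply: cvg_trans (near_eq_cvg nb) _.
rewrite -(TT_stable HB phi d0 x0 (_ : (M0 n B d r0 <= M)%N)); last first.
  by apply: M0_mono; lra.
exact: TT_cont.
Qed.

Lemma GG_at_zero n B d phi p : ww d p = 0 -> (2 <= M0 n B d p.2)%N ->
  GG n B d phi p = gg d phi p.
Proof.
move=> w0 hM; rewrite /GG /TT.
case: (M0 n B d p.2) hM => [//|M] _.
rewrite big_ord_recl /term /WW big_ord0 mul1r psi0 big1 ?addr0 //.
by move=> j _; rewrite big_ord_recl psi0 w0 mul0r mul0r.
Qed.

Lemma M0_ge2 n B d r : (2 <= M0 n B d r)%N.
Proof. by rewrite /M0. Qed.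

Local Notation S := (suspension_space l k b).

Lemma piS_eq (a c : XR) : (\pi_S a = \pi_S c) -> crst a c.
Proof.
move=> h; have : gen_equiv step a c.
  by apply/(@eqquotP _ _ {eq_quot gen_equiv_rel step} a c); exact: h.
by move/asboolP.
Qed.

Lemma piS_eq' (a c : XR) : crst a c -> \pi_S a = \pi_S c.
Proof.
move=> h; have e : gen_equiv step a c by apply/asboolP.
exact: (@eqquotP _ _ {eq_quot gen_equiv_rel step} a c e).
Qed.

Lemma reprS (s : S) : \pi_S (repr s) = s.
Proof. exact: reprK. Qed.

Lemma GG_crst n B d phi (HB : forall x j, j%:R - B <= n%:R * Sc j x) (d0 : 0 < d)
  (p q : XR) : crst p q -> GG n B d phi (val p) = GG n B d phi (val q).
Proof.
move=> H; induction H as [a c st|a|a c H IH|a c e H1 IH1 H2 IH2] => //.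
- move: st; case: a => [[x r] hp]; rewrite /susp_step /= => -[hl ->].
  exact: GG_inv.
- by rewrite IH1 IH2.
Qed.

Lemma main_compact : compact [set: S].
Proof.
have bl (x : XA A) (t : R) : b x <= b x + `|t| * (l x - b x).
  by rewrite lerDl mulr_ge0 // subr_ge0 lb_ge0.
pose f := fun p : XA A * R => \pi_S (mkXR (bl p.1 p.2)).
have fc : continuous f.
  move=> p; apply: (@continuous_comp _ XR S (fun p : XA A * R => mkXR (bl p.1 p.2)) (\pi_S)); last first.
    exact: pi_continuous.
  move: p; apply: (@continuous_comp_initial _ _ _ (@set_val _ (XR_set b))).
  apply: pair_continuous; first exact: fst_cont.
  move=> p; apply: (@continuousD _ _ _ (b \o fst) (fun p : XA A * R => `|p.2| * (l p.1 - b p.1))).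
    by apply: continuous_comp; [exact: fst_cont | exact: b_cont].
  apply: (@continuousM _ _ (fun p : XA A * R => `|p.2|) (fun p : XA A * R => l p.1 - b p.1)).
    by apply: continuous_comp; [exact: snd_cont | exact: norm_continuous].
  apply: (@continuousB _ _ _ (l \o fst) (b \o fst)).
    by apply: continuous_comp; [exact: fst_cont | exact: l_cont].
  by apply: continuous_comp; [exact: fst_cont | exact: b_cont].
have -> : [set: S] = f @` ([set: XA A] `*` `[0, 1]).
  rewrite eqEsubset; split => // s _.
  have [q [pq qn]] := normal_form (repr s).
  have qb := XR_ge q.
  move: qn qb; case E : (val q) => [y t0] /= qn qb.
  have hpos : 0 < l y - b y by lra.
  exists (y, (t0 - b y) / (l y - b y)).
    split => //=; rewrite in_itv /=; apply/andP; split.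
      by apply: divr_ge0; lra.
    by rewrite ler_pdivrMr // mul1r; lra.
  rewrite /f -[X in _ = X](reprS s); apply: piS_eq'; apply: rst_sym.
  have -> : mkXR (bl (y, (t0 - b y) / (l y - b y)).1 (y, (t0 - b y) / (l y - b y)).2) = q.
    apply: val_inj; rewrite /= E; congr pair.
    rewrite ger0_norm; last by apply: divr_ge0; lra.
    by rewrite divfK ?gt_eqF //; lra.
  exact: pq.
apply: continuous_compact; first exact: continuous_subspaceT.
apply: compact_setX; first exact: XA_compact.
exact: segment_compact.
Qed.

Lemma main_hausdorff : hausdorff_space S.
Proof.
have [n [B HB]] := key_bound.
rewrite open_hausdorff => s1 s2 ne.
have [q1 [pq1 qn1]] := normal_form (repr s1).
have [q2 [pq2 qn2]] := normal_form (repr s2).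
have hs1 : \pi_S q1 = s1.
  by rewrite -[X in _ = X](reprS s1); apply: piS_eq'; apply: rst_sym.
have hs2 : \pi_S q2 = s2.
  by rewrite -[X in _ = X](reprS s2); apply: piS_eq'; apply: rst_sym.
have nq : val q1 <> val q2.
  by move=> /val_inj e; move: ne; rewrite -hs1 -hs2 e eqxx.
move: qn1 qn2 nq; case E1 : (val q1) => [y1 t1]; case E2 : (val q2) => [y2 t2] /= qn1 qn2 nq.
pose d := Num.min (l y1 - t1) (l y2 - t2).
have d0 : 0 < d by rewrite lt_min; apply/andP; split; lra.
have hd1 : d <= l y1 - t1 by rewrite /d ge_min lexx.
have hd2 : d <= l y2 - t2 by rewrite /d ge_min lexx orbT.
have [m hm] : exists m, y1 = y2 \/ (val y2 : seq_space N) m != (val y1 : seq_space N) m.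
  case: (pselect (y1 = y2)) => [->|ne12]; first by exists 0%N; left.
  apply: contrapT => H; apply: ne12; apply: val_inj; apply/funext => m.
  apply/eqP; apply: contrapT => hm; apply: H; exists m; right.
  by apply/negP => /eqP e; apply: hm; rewrite e.
pose phi := fun x : XA A =>
  if (val x : seq_space N) m == (val y1 : seq_space N) m then (1:R) else 0.
have phic : continuous phi.
  have -> : phi = (fun z : alphabet N => if z == (val y1 : seq_space N) m then (1:R) else 0)
     \o (fun x : XA A => (set_val x : seq_space N) m) by rewrite set_valE.
  move=> x; apply: (@continuous_comp (XA A) (alphabet N) R
    (fun x : XA A => (set_val x : seq_space N) m)
    (fun z : alphabet N => if z == (val y1 : seq_space N) m then (1:R) else 0)).
    apply: (@continuous_comp (XA A) (seq_space N) (alphabet N) set_val (proj m)).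
      exact: initial_continuous.
    exact: (@proj_continuous nat (fun _ => alphabet N) m).
  exact: cont_from_discrete.
pose Gt := fun p : XR => GG n B d phi (val p).
have Gtc : continuous Gt.
  have -> : Gt = GG n B d phi \o set_val by rewrite set_valE.
  move=> p; apply: continuous_comp.
    exact: initial_continuous.
  exact: GG_cont.
pose Gh := Gt \o (repr : S -> XR).
have Ghc : continuous Gh.
  apply: repr_comp_continuous => // a c /eqP /piS_eq h; apply/eqP.
  exact: GG_crst.
have Gq1 : Gh s1 = GG n B d phi (val q1) by exact: GG_crst pq1.
have Gq2 : Gh s2 = GG n B d phi (val q2) by exact: GG_crst pq2.
have w1 : ww d (y1, t1) = 0 by apply: ww0 => /=; lra.
have w2 : ww d (y2, t2) = 0 by apply: ww0 => /=; lra.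
have G1 : Gh s1 = l y1 - t1.
  rewrite Gq1 E1 GG_at_zero // ?M0_ge2 // /gg w1 /phi /= eqxx; lra.
have G2 : Gh s2 = phi y2 * (l y2 - t2).
  by rewrite Gq2 E2 GG_at_zero // ?M0_ge2 // /gg w2 /= subr0 mulr1.
have neG : Gh s1 != Gh s2.
  rewrite G1 G2 /phi; case: hm => [e12|hm].
    subst y2; rewrite eqxx mul1r; apply/eqP => e; apply: nq.
    by congr pair; lra.
  by rewrite (negbTE hm) mul0r; apply/eqP; lra.
have := @Rhausdorff R; rewrite open_hausdorff => /(_ _ _ neG) [[U V] [/= U1 V2] [/= oU oV /eqP UV]].
exists (Gh @^-1` U, Gh @^-1` V).
  by move: U1 V2; rewrite !in_setE.
split.
- exact: open_comp (fun x _ => Ghc x) oU.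
- exact: open_comp (fun x _ => Ghc x) oV.
- by apply/eqP; rewrite /= -preimage_setI UV preimage_set0.
Qed.

End Main.

Set Implicit Arguments.
Unset Implicit Arguments.

Theorem proposition2p4 (R : realType) (N : nat) (A : 'M[nat]_N)
    (HN : (1 < N)%N) (HA01 : zero_one_mx A) (HAirr : irreducible_mx A)
    (HAperm : ~ is_permutation_mx A)
    (l k b : XA A -> R) (Htrip : suspension_triplet l k b) :
  compact [set: suspension_space l k b] /\
  hausdorff_space (suspension_space l k b).
Proof.
split; [exact: main_compact | exact: main_hausdorff].
Qed.
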